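(* Assume Case 3 holds. Let $(C,D)=(n_2,m_2)$ and for $n\ge1$ put $$(C_n,D_n)=(\gamma_n-(\gamma-C)d^{n-1},\ Dd^{n-1}),\qquad (C_n^*,D_n^* )=\big((\delta^{n-1}+\delta^{n-2}D+\cdots+\delta D^{n-2}+D^{n-1})C,\ D^n\big).$$ (i) If $\delta>T_1$, then for every $n\ge1$, $(C_n,D_n)$ is the vertex of $N(Q^n)$ immediately following $(\gamma_n,d^n)$ (in order of increasing $x$-coordinate), the segment joining them has slope $-l_2^{-1}$, and $\delta^n$ is strictly bigger than the $y$-intercept of the line through $(\gamma_n,d^n)$ and $(C_n,D_n)$. (ii) If $\delta=T_1$ and $m_2>0$, then for every $n\ge1$, $(C_n^*,D_n^* )$ is the vertex of $N(Q^n)$ immediately following $(\gamma_n,d^n)$, the segment joining them has slope $-l_2^{-1}$, and $\delta^n$ equals the $y$-intercept of the line through $(\gamma_n,d^n)$ and $(C_n^*,D_n^* )$.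
   Context: Let $f(z,w)=(p(z),q(z,w))$ be a holomorphic skew product germ at the origin of $\mathbb{C}^2$ with $f(0,0)=(0,0)$, where $p(z)=a_\delta z^\delta+O(z^{\delta+1})$ with $a_\delta\neq0$ and integer $\delta\ge1$, and $q(z,w)=\sum_{i+j\ge1}b_{ij}z^iw^j$ is not identically zero. For $n\ge1$ write $f^n=(p^n,Q^n)$. The Newton polygon $N(g)$ of a nonzero germ $g=\sum g_{ij}z^iw^j$ is the convex hull of $\bigcup_{g_{ij}\neq0}\{(x,y):x\ge i,\ y\ge j\}$. Let $(n_1,m_1),\dots,(n_s,m_s)$ be the vertices of $N(q)$ with $n_1<\cdots<n_s$, $m_1>\cdots>m_s$; for $1\le k\le s-1$ let $T_k$ be the $y$-intercept of the line through $(n_k,m_k)$ and $(n_{k+1},m_{k+1})$. Case 3 means: $s>1$ and $T_1\le\delta$; set $(\gamma,d)=(n_1,m_1)$ and $l_2=\frac{n_2-n_1}{m_1-m_2}$. Define $\gamma_n=\gamma(\delta^{n-1}+\delta^{n-2}d+\cdots+d^{n-1})$. *)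

(* Defs.v *)
From HB Require Import structures.
From mathcomp Require Import all_boot all_order all_algebra.
From mathcomp Require Import reals.
From mathcomp Require Import complex.
Set Implicit Arguments. Unset Strict Implicit. Unset Printing Implicit Defensive.
Import Order.TTheory GRing.Theory Num.Theory.
Local Open Scope ring_scope.

(** Power series (germs at 0) are represented by their coefficient arrays:
    a one-variable series  p = sum_i p i z^i  is [nat -> K];
    a two-variable series  g = sum_{i,j} g i j z^i w^j  is [nat -> nat -> K]. *)

Section Series.
Variable K : comNzRingType.

(** Truncation to total degree <= N, as a bivariate polynomial:
    outer variable is w, inner variable is z. *)
Definition trunc1 (N : nat) (p : nat -> K) : {poly K} :=
  \poly_(i < N.+1) p i.

Definition trunc2 (N : nat) (g : nat -> nat -> K) : {poly {poly K}} :=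
  \poly_(j < N.+1) (\poly_(i < N.+1) (if (i + j <= N)%N then g i j else 0)).

Definition coef2 (P : {poly {poly K}}) (i j : nat) : K := (P`_j)`_i.

(** substitution (z, w) := (a(z), b(z, w)) in a bivariate polynomial q *)
Definition subst2 (q : {poly {poly K}}) (a : {poly K}) (b : {poly {poly K}})
  : {poly {poly K}} :=
  (map_poly polyC (map_poly (fun c : {poly K} => c \Po a) q)).[b].

(** polynomial iterates of the truncations:
    pit N n = (trunc p)^{o n}, Qit N n = second component of (trunc f)^{o n}
    (with f^1 = (p, q), f^(n+1) = f o f^n = (p(p^n), q(p^n, Q^n))). *)
Fixpoint pit (N : nat) (p : nat -> K) (n : nat) : {poly K} :=
  match n with
  | 0 => 'X
  | n'.+1 => trunc1 N p \Po pit N p n'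
  end.

Fixpoint Qit (N : nat) (p : nat -> K) (q : nat -> nat -> K) (n : nat)
  : {poly {poly K}} :=
  match n with
  | 0 => 'X
  | n'.+1 => subst2 (trunc2 N q) (pit N p n') (Qit N p q n')
  end.

(** Coefficients of the formal power series Q^n, where f^n = (p^n, Q^n).
    Since p(0) = 0 and q(0,0) = 0, the coefficient of z^i w^j of the
    composite only depends on the coefficients of total degree <= i + j,
    so it is computed exactly from the truncations at degree N = i + j. *)
Definition Qn (p : nat -> K) (q : nat -> nat -> K) (n : nat) : nat -> nat -> K :=
  fun i j => coef2 (Qit (i + j) p q n) i j.

End Series.

Section Newton.
Variable R : realType.
Variable K : comNzRingType.

Definition in_quadrants (g : nat -> nat -> K) (v : R * R) : Prop :=
  exists i j : nat, g i j != 0 /\ (i%:R <= v.1) /\ (j%:R <= v.2).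

Definition newton_polygon (g : nat -> nat -> K) (v : R * R) : Prop :=
  exists (m : nat) (lam : 'I_m -> R) (pts : 'I_m -> R * R),
    (forall k, 0 <= lam k) /\ (\sum_(k < m) lam k = 1) /\
    (forall k, in_quadrants g (pts k)) /\
    v.1 = \sum_(k < m) lam k * (pts k).1 /\ v.2 = \sum_(k < m) lam k * (pts k).2.

Definition is_vertex (g : nat -> nat -> K) (v : R * R) : Prop :=
  newton_polygon g v /\
  forall (a b : R * R) (t : R), newton_polygon g a -> newton_polygon g b ->
    0 < t < 1 -> v = (t * a.1 + (1 - t) * b.1, t * a.2 + (1 - t) * b.2) ->
    a = b.

Definition next_vertex (g : nat -> nat -> K) (v w : R * R) : Prop :=
  is_vertex g v /\ is_vertex g w /\ v.1 < w.1 /\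
  forall u, is_vertex g u -> ~ (v.1 < u.1 /\ u.1 < w.1).

Definition y_intercept (x1 y1 x2 y2 : R) : R :=
  y1 - x1 * ((y2 - y1) / (x2 - x1)).

Definition slope (x1 y1 x2 y2 : R) : R := (y2 - y1) / (x2 - x1).

End Newton.

(** holomorphy (convergence near 0) of a germ given by its coefficients *)
Definition convergent1 (R : realType) (p : nat -> R[i]) : Prop :=
  exists (M r : R), 0 < r /\ forall i, `|p i| <= (M / r ^+ i)%:C%C.

Definition convergent2 (R : realType) (g : nat -> nat -> R[i]) : Prop :=
  exists (M r : R), 0 < r /\ forall i j, `|g i j| <= (M / r ^+ (i + j))%:C%C.

Definition gamma_n (gamma delta d n : nat) : nat :=
  (gamma * \sum_(k < n) delta ^ (n.-1 - k) * d ^ k)%N.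

(* Main.v *)
Set Warnings "-all".
Require Import Defs.
From HB Require Import structures.
From mathcomp Require Import all_boot all_order all_algebra.
From mathcomp Require Import reals complex.
From mathcomp Require Import zify.
From mathcomp.algebra_tactics Require Import ring lra.
From Stdlib Require Import Classical.
Import Order.TTheory GRing.Theory Num.Theory.
Local Open Scope ring_scope.
Set Implicit Arguments. Unset Strict Implicit. Unset Printing Implicit Defensive.

Section Alg.
Variable F : fieldType.
Local Notation P2 := {poly {poly F}}.
Implicit Types (P Q E G : P2).

Definition wge (a b c : nat) P := forall i j, coef2 P i j != 0 -> (c <= a * i + b * j)%N.
Definition hom (a b c : nat) P := forall i j, coef2 P i j != 0 -> (a * i + b * j)%N = c.
Definition approx a b c P E := wge a b c.+1 (P - E).

Lemma coef2D P Q i j : coef2 (P + Q) i j = coef2 P i j + coef2 Q i j.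
Proof. by rewrite /coef2 !coefD. Qed.
Lemma coef2N P i j : coef2 (- P) i j = - coef2 P i j.
Proof. by rewrite /coef2 !coefN. Qed.
Lemma coef2B P Q i j : coef2 (P - Q) i j = coef2 P i j - coef2 Q i j.
Proof. by rewrite coef2D coef2N. Qed.
Lemma coef20 i j : coef2 (0 : P2) i j = 0.
Proof. by rewrite /coef2 !coef0. Qed.
Lemma coef2_sum (I : Type) (r : seq I) (Pr : pred I) (f : I -> P2) i j :
  coef2 (\sum_(k <- r | Pr k) f k) i j = \sum_(k <- r | Pr k) coef2 (f k) i j.
Proof. by rewrite /coef2 !coef_sum. Qed.
Lemma coef2C (c : F) i j : coef2 (c%:P%:P : P2) i j = if (i == 0%N) && (j == 0%N) then c else 0.
Proof. rewrite /coef2 coefC; case: eqP => _ /=; rewrite ?coefC ?coef0 ?andbT ?andbF //; by case: ifP.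
Qed.
Lemma coef2M P Q i j : coef2 (P * Q) i j =
  \sum_(k < j.+1) \sum_(l < i.+1) coef2 P l k * coef2 Q (i - l) (j - k).
Proof. by rewrite /coef2 coefM coef_sum; apply: eq_bigr => k _; rewrite coefM. Qed.

Lemma sum_neq0 (I : finType) (f : I -> F) : \sum_k f k != 0 -> exists k, f k != 0.
Proof.
move=> H; apply: NNPP => Hn; move/negP: H; apply; apply/eqP.
apply: big1 => k _; case: (eqVneq (f k) 0) => // Hk; exfalso; apply: Hn; by exists k.
Qed.

Lemma coef2M_neq0 P Q i j : coef2 (P * Q) i j != 0 ->
  exists k l, (k <= j)%N /\ (l <= i)%N /\ coef2 P l k != 0 /\ coef2 Q (i - l) (j - k) != 0.
Proof.
rewrite coef2M => /sum_neq0 [k /sum_neq0 [l H]].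
exists k, l; split; first by rewrite -ltnS ltn_ord.
split; first by rewrite -ltnS ltn_ord.
by split; apply: contraNneq H => ->; rewrite ?mul0r ?mulr0.
Qed.

Lemma wge0 a b c : wge a b c 0.
Proof. by move=> i j; rewrite coef20 eqxx. Qed.
Lemma wge_any a b P : wge a b 0 P.
Proof. by []. Qed.
Lemma wgeD a b c P Q : wge a b c P -> wge a b c Q -> wge a b c (P + Q).
Proof.
move=> HP HQ i j; rewrite coef2D => H.
case: (eqVneq (coef2 P i j) 0) => [E|]; last exact: HP.
by apply: HQ; move: H; rewrite E add0r.
Qed.
Lemma wgeN a b c P : wge a b c P -> wge a b c (- P).
Proof. by move=> HP i j; rewrite coef2N oppr_eq0; apply: HP. Qed.
Lemma wgeB a b c P Q : wge a b c P -> wge a b c Q -> wge a b c (P - Q).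
Proof. by move=> HP HQ; apply: wgeD => //; apply: wgeN. Qed.
Lemma wge_le a b c c' P : (c' <= c)%N -> wge a b c P -> wge a b c' P.
Proof. by move=> Hc HP i j /HP; apply: leq_trans. Qed.
Lemma wge_sum a b c (I : Type) (r : seq I) (Pr : pred I) (f : I -> P2) :
  (forall k, Pr k -> wge a b c (f k)) -> wge a b c (\sum_(k <- r | Pr k) f k).
Proof.
move=> H; elim/big_ind: _ => //; [exact: wge0| exact: wgeD].
Qed.
Lemma wgeM a b c1 c2 P Q : wge a b c1 P -> wge a b c2 Q -> wge a b (c1 + c2) (P * Q).
Proof.
move=> HP HQ i j /coef2M_neq0 [k [l [Hk [Hl [/HP H1 /HQ H2]]]]].
have -> : (a * i + b * j = (a * l + b * k) + (a * (i - l) + b * (j - k)))%N.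
  by rewrite !mulnBr; have := leq_mul (leqnn a) Hl; have := leq_mul (leqnn b) Hk; lia.
exact: leq_add.
Qed.
Lemma wgeX a b c P n : wge a b c P -> wge a b (n * c) (P ^+ n).
Proof.
move=> HP; elim: n => [|n IH]; first exact: wge_any.
by rewrite exprS mulSn; apply: wgeM.
Qed.

Lemma hom0 a b c : hom a b c 0.
Proof. by move=> i j; rewrite coef20 eqxx. Qed.
Lemma homD a b c P Q : hom a b c P -> hom a b c Q -> hom a b c (P + Q).
Proof.
move=> HP HQ i j; rewrite coef2D => H.
case: (eqVneq (coef2 P i j) 0) => [E|]; last exact: HP.
by apply: HQ; move: H; rewrite E add0r.
Qed.
Lemma homN a b c P : hom a b c P -> hom a b c (- P).
Proof. by move=> HP i j; rewrite coef2N oppr_eq0; apply: HP. Qed.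
Lemma hom_sum a b c (I : Type) (r : seq I) (Pr : pred I) (f : I -> P2) :
  (forall k, Pr k -> hom a b c (f k)) -> hom a b c (\sum_(k <- r | Pr k) f k).
Proof.
move=> H; elim/big_ind: _ => //; [exact: hom0| exact: homD].
Qed.
Lemma homM a b c1 c2 P Q : hom a b c1 P -> hom a b c2 Q -> hom a b (c1 + c2) (P * Q).
Proof.
move=> HP HQ i j /coef2M_neq0 [k [l [Hk [Hl [/HP H1 /HQ H2]]]]].
rewrite -H1 -H2 !mulnBr; have := leq_mul (leqnn a) Hl; have := leq_mul (leqnn b) Hk; lia.
Qed.
Lemma homX a b c P n : hom a b c P -> hom a b (n * c) (P ^+ n).
Proof.
move=> HP; elim: n => [|n IH].
  move=> i j; rewrite expr0; have -> : (1%R : P2) = ((1%R : F)%:P)%:P by rewrite !polyC1.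
  rewrite coef2C.
  case: (i =P 0%N) => [->|_] /=; last by rewrite eqxx.
  case: (j =P 0%N) => [->|_] /=; last by rewrite eqxx.
  by rewrite !muln0.
by rewrite exprS mulSn; apply: homM.
Qed.
Lemma hom_wge a b c P : hom a b c P -> wge a b c P.
Proof. by move=> H i j /H ->. Qed.

Lemma approx_wge a b c P E : approx a b c P E -> wge a b c E -> wge a b c P.
Proof.
move=> H HE; have -> : P = E + (P - E) by rewrite addrC subrK.
by apply: wgeD => //; apply: wge_le H.
Qed.

Lemma approxM a b c1 c2 P E Q G : approx a b c1 P E -> approx a b c2 Q G ->
  wge a b c1 E -> wge a b c2 Q -> approx a b (c1 + c2) (P * Q) (E * G).
Proof.
move=> H1 H2 HE HQ; rewrite /approx.
have -> : P * Q - E * G = (P - E) * Q + E * (Q - G).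
  by rewrite mulrBl mulrBr addrA subrK.
apply: wgeD; first by rewrite -addSn; apply: wgeM.
by rewrite -addnS; apply: wgeM.
Qed.
Lemma approxX a b c P E n : approx a b c P E -> wge a b c E ->
  approx a b (n * c) (P ^+ n) (E ^+ n).
Proof.
move=> H HE; elim: n => [|n IH]; first by rewrite /approx !expr0 subrr; apply: wge0.
rewrite !exprS mulSn; apply: approxM => //.
by apply: wgeX; apply: approx_wge H HE.
Qed.
Lemma approxD a b c P E Q G : approx a b c P E -> approx a b c Q G ->
  approx a b c (P + Q) (E + G).
Proof. by move=> H1 H2; rewrite /approx opprD addrACA; apply: wgeD. Qed.

Lemma wge_diffM a b k P P' Q Q' : wge a b k (P - P') -> wge a b k (Q - Q') ->
  wge a b k (P * Q - P' * Q').
Proof.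
move=> H1 H2.
have -> : P * Q - P' * Q' = (P - P') * Q + P' * (Q - Q').
  by rewrite mulrBl mulrBr addrA subrK.
apply: wgeD; first by rewrite -[k]addn0; apply: wgeM.
by rewrite -[k]add0n; apply: wgeM.
Qed.
Lemma wge_diffX a b k P P' n : wge a b k (P - P') -> wge a b k (P ^+ n - P' ^+ n).
Proof.
move=> H; elim: n => [|n IH]; first by rewrite !expr0 subrr; apply: wge0.
by rewrite !exprS; apply: wge_diffM.
Qed.

End Alg.

Section Scale.
Variable F : fieldType.
Local Notation P2 := {poly {poly F}}.
Lemma wge_scale a b k V (P : P2) : (0 < V)%N -> wge a b k.+1 P -> wge (a * V) (b * V) (k * V).+1 P.
Proof.
move=> HV H i j /H Hk; have := leq_mul Hk (leqnn V); nia.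
Qed.
Lemma hom_scale a b k V (P : P2) : hom a b k P -> hom (a * V) (b * V) (k * V) P.
Proof. by move=> H i j /H <-; rewrite mulnDl -!mulnA (mulnC V i) (mulnC V j). Qed.
Lemma approx_coef a b c (Q E : P2) i j : approx a b c Q E -> (a * i + b * j)%N = c ->
  coef2 Q i j = coef2 E i j.
Proof.
move=> H HL; apply/eqP; rewrite -subr_eq0 -coef2B; apply/negP => /negP /H.
by rewrite HL ltnn.
Qed.
End Scale.


Section Alg2.
Variable F : fieldType.
Local Notation P2 := {poly {poly F}}.
Implicit Types (P Q E G : P2).

Lemma subst2E (q : P2) (a : {poly F}) (b : P2) :
  subst2 q a b = \sum_(j < size q) \sum_(i < size q`_j) (q`_j`_i)%:P%:P * (a%:P)^+i * b^+j.
Proof.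
rewrite /subst2 (horner_coef_wide _ (n:=size q)); last first.
  by rewrite size_map_polyC; rewrite /map_poly; apply: size_poly.
apply: eq_bigr => j _; rewrite coef_map /= coef_map_id0 ?comp_poly0 //.
rewrite comp_polyE rmorph_sum mulr_suml; apply: eq_bigr => i _.
by rewrite -mul_polyC !rmorphM !rmorphXn.
Qed.

Lemma coef2_polyC (t : {poly F}) i j : coef2 (t%:P : P2) i j = if j == 0%N then t`_i else 0.
Proof. by rewrite /coef2 coefC; case: ifP => //; rewrite coef0. Qed.

Lemma homC a b (c : F) : hom a b 0 (c%:P%:P).
Proof.
move=> i j; rewrite coef2C; case: (i =P 0%N) => [->|_] /=; last by rewrite eqxx.
by case: (j =P 0%N) => [->|_] /=; rewrite ?eqxx // !muln0.
Qed.

Lemma subst_wge u v m a b (q : P2) (A : {poly F}) (B : P2) :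
  wge u v m q -> wge a b u (A%:P) -> wge a b v B -> wge a b m (subst2 q A B).
Proof.
move=> Hq HA HB; rewrite subst2E; apply: wge_sum => j _; apply: wge_sum => i _.
case: (eqVneq (q`_j`_i) 0) => [->|Hc]; first by rewrite !mul0r; apply: wge0.
have Hm := Hq i j Hc.
apply: (wge_le (c := (0 + i * u + j * v)%N)); first by rewrite add0n (mulnC i) (mulnC j).
by apply: wgeM; [apply: wgeM; [apply: wge_any| apply: wgeX]| apply: wgeX].
Qed.

Lemma subst_diff a b k (q : P2) (A A' : {poly F}) (B B' : P2) :
  wge a b k (A%:P - A'%:P) -> wge a b k (B - B') ->
  wge a b k (subst2 q A B - subst2 q A' B').
Proof.
move=> HA HB; rewrite !subst2E -sumrB; apply: wge_sum => j _.
rewrite -sumrB; apply: wge_sum => i _.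
apply: wge_diffM; last exact: wge_diffX.
by apply: wge_diffM; [rewrite subrr; apply: wge0| apply: wge_diffX].
Qed.

Lemma subst2B (q q0 : P2) (A : {poly F}) (B : P2) :
  subst2 (q - q0) A B = subst2 q A B - subst2 q0 A B.
Proof.
rewrite /subst2.
have -> : map_poly (fun c : {poly F} => c \Po A) (q - q0) =
  map_poly (fun c : {poly F} => c \Po A) q - map_poly (fun c : {poly F} => c \Po A) q0.
  apply/polyP => k; rewrite coefB !coef_map_id0 ?comp_poly0 // coefB.
  by rewrite comp_polyB.
by rewrite rmorphB hornerD hornerN.
Qed.

Lemma hom_subst u v m a b (q0 : P2) (A0 : {poly F}) (E : P2) :
  hom u v m q0 -> hom a b u (A0%:P) -> hom a b v E -> hom a b m (subst2 q0 A0 E).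
Proof.
move=> Hq HA HE; rewrite subst2E; apply: hom_sum => j _; apply: hom_sum => i _.
case: (eqVneq (q0`_j`_i) 0) => [->|Hc]; first by rewrite !mul0r; apply: hom0.
have <- := Hq i j Hc; rewrite -[(u * i)%N]add0n (mulnC u) (mulnC v).
by apply: homM; [apply: homM; [apply: homC| apply: homX]| apply: homX].
Qed.

Lemma subst_approx u v m a b (q q0 : P2) (A A0 : {poly F}) (B E : P2) :
  wge u v m.+1 (q - q0) -> hom u v m q0 ->
  approx a b u (A%:P) (A0%:P) -> hom a b u (A0%:P) ->
  approx a b v B E -> hom a b v E ->
  approx a b m (subst2 q A B) (subst2 q0 A0 E).
Proof.
move=> Hq Hq0 HA HA0 HB HE.
have HA0w := hom_wge HA0; have HEw := hom_wge HE.
have HAw := approx_wge HA HA0w; have HBw := approx_wge HB HEw.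
rewrite /approx.
have -> : subst2 q A B - subst2 q0 A0 E =
  subst2 (q - q0) A B + (subst2 q0 A B - subst2 q0 A0 E).
  by rewrite subst2B addrA subrK.
apply: wgeD; first exact: (subst_wge Hq).
rewrite !subst2E -sumrB; apply: wge_sum => j _.
rewrite -sumrB; apply: wge_sum => i _.
case: (eqVneq (q0`_j`_i) 0) => [->|Hc]; first by rewrite !mul0r subrr; apply: wge0.
have Hm := Hq0 i j Hc.
rewrite -!mulrA -mulrBr -[m.+1]add0n; apply: wgeM; first exact: wge_any.
have -> : m = (i * u + j * v)%N by rewrite -Hm mulnC (mulnC j).
apply: approxM; [exact: approxX| exact: approxX| exact: wgeX| exact: wgeX].
Qed.

Lemma wge_const_scale a b k (t : {poly F}) : (0 < a)%N ->
  wge 1 1 k (t%:P) -> wge a b (a * k) (t%:P).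
Proof.
move=> Ha H i j Hc; have := H i j Hc; move: Hc; rewrite coef2_polyC.
case: (j =P 0%N) => [-> _|_]; last by rewrite eqxx.
rewrite !muln0 !addn0 !mul1n => Hk; exact: leq_mul.
Qed.

Lemma comp_subst2 (t A : {poly F}) (B : P2) : (t \Po A)%:P = subst2 (t%:P) A B.
Proof.
rewrite /subst2.
have -> : map_poly (fun c : {poly F} => c \Po A) t%:P = (t \Po A)%:P.
  by apply/polyP => k; rewrite coef_map_id0 ?comp_poly0 // !coefC; case: eqP; rewrite ?comp_poly0.
by rewrite map_polyC hornerC.
Qed.

End Alg2.


Section TopBot.
Variable R : idomainType.
Implicit Types (P Q E X : {poly R}).

Definition bot P (lo : nat) := (forall j, (j < lo)%N -> P`_j = 0) /\ P`_lo != 0.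
Definition top P (h : nat) := size P = h.+1.

Lemma bot_decomp P l : bot P l -> P = drop_poly l P * 'X^l.
Proof.
case=> H _; rewrite -{1}(poly_take_drop l P).
have -> : take_poly l P = 0.
  by apply/polyP => k; rewrite coef_take_poly coef0; case: ifP => // /H.
by rewrite add0r.
Qed.

Lemma botM P Q l1 l2 : bot P l1 -> bot Q l2 -> bot (P * Q) (l1 + l2).
Proof.
move=> HP HQ; rewrite (bot_decomp HP) (bot_decomp HQ) mulrACA -exprD.
split=> [j Hj|]; first by rewrite coefMXn Hj.
rewrite coefMXn ltnn subnn coef0M !coef_drop_poly !add0n.
by rewrite mulf_neq0 //; [case: HP| case: HQ].
Qed.

Lemma bot1 : bot 1 0.
Proof. by split=> // ; rewrite coefC eqxx oner_eq0. Qed.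

Lemma botX P l n : bot P l -> bot (P ^+ n) (l * n).
Proof.
move=> H; elim: n => [|n IH]; first by rewrite expr0 muln0; apply: bot1.
by rewrite exprS mulnS; apply: botM.
Qed.

Lemma top_nz P h : top P h -> P != 0.
Proof. by rewrite /top => H; rewrite -size_poly_eq0 H. Qed.

Lemma topM P Q h1 h2 : top P h1 -> top Q h2 -> top (P * Q) (h1 + h2).
Proof.
move=> HP HQ; rewrite /top size_mul ?(top_nz HP) ?(top_nz HQ) //.
by rewrite HP HQ addSn addnS.
Qed.

Lemma topX P h n : top P h -> top (P ^+ n) (h * n).
Proof.
move=> H; elim: n => [|n IH]; first by rewrite /top expr0 size_poly1 muln0.
by rewrite exprS mulnS; apply: topM.
Qed.


End TopBot.

Section Subst.
Variable F : fieldType.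
Local Notation P2 := {poly {poly F}}.

Lemma comp_nz (c A0 : {poly F}) : c != 0 -> (1 < size A0)%N -> c \Po A0 != 0.
Proof.
move=> Hc HA; apply/negP => /eqP H0.
have := size_comp_poly c A0; rewrite H0 size_poly0 /=.
case Hs: (size c) => [|[|s]] /=.
- by move: Hc; rewrite -size_poly_eq0 Hs.
- move: H0; rewrite (@size1_polyC _ c) ?Hs // comp_polyC => /eqP.
  rewrite polyC_eq0 => H0 _; move: Hc; rewrite (@size1_polyC _ c) ?Hs //.
  by rewrite (eqP H0) eqxx.
- by move: HA; case: (size A0) => [|[|t]] //.
Qed.

Lemma subst2_comp (q0 : P2) (A0 : {poly F}) (E : P2) :
  subst2 q0 A0 E = map_poly (fun c : {poly F} => c \Po A0) q0 \Po E.
Proof. by []. Qed.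

Lemma top_subst (q0 : P2) (A0 : {poly F}) (E : P2) Tq h :
  top q0 Tq -> top E h -> (0 < h)%N -> (1 < size A0)%N ->
  top (subst2 q0 A0 E) (Tq * h).
Proof.
move=> Hq HE Hh HA; rewrite subst2_comp.
set X := map_poly _ q0.
have Hlq : lead_coef q0 != 0 by rewrite lead_coef_eq0 (top_nz Hq).
have HX : size X = size q0 by apply: size_map_poly_id0; apply: comp_nz.
have HXnz : X != 0 by rewrite -size_poly_eq0 HX Hq.
have HE1 : (1 < size E)%N by rewrite HE ltnS.
have Hnz : X \Po E != 0.
  rewrite -lead_coef_eq0 lead_coef_comp // mulf_neq0 ?lead_coef_eq0 //.
  by rewrite expf_neq0 // lead_coef_eq0 (top_nz HE).
have := size_comp_poly X E; rewrite HX Hq HE /= => H.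
rewrite /top -H prednK // lt0n size_poly_eq0 //.
Qed.

Lemma bot_subst (q0 : P2) (A0 : {poly F}) (E : P2) Bq lo :
  bot q0 Bq -> bot E lo -> (1 < size A0)%N ->
  (0 < lo)%N || (size q0 <= Bq.+1)%N ->
  bot (subst2 q0 A0 E) (lo * Bq).
Proof.
move=> Hq HE HA Hcase; rewrite subst2_comp.
set X := map_poly _ q0.
have HXb : bot X Bq.
  split=> [j Hj|]; rewrite /X coef_map_id0 ?comp_poly0 //.
    by case: Hq => H _; rewrite H // comp_poly0.
  by apply: comp_nz => //; case: Hq.
rewrite (bot_decomp HXb) comp_polyM comp_Xn_poly mulnC -[(Bq * lo)%N]add0n.
apply: botM; last by rewrite mulnC; apply: botX.
set X' := drop_poly Bq X.
have HX'0 : X'`_0 != 0 by rewrite /X' coef_drop_poly add0n; case: HXb.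
split=> //; case/orP: Hcase => [Hlo|Hs].
  rewrite -horner_coef0 horner_comp horner_coef0.
  by case: HE => H _; rewrite H // horner_coef0.
have HsX : (size X' <= 1)%N.
  rewrite /X' size_drop_poly; have : (size X <= size q0)%N.
    by rewrite /X /map_poly; apply: size_poly.
  move=> HXq; rewrite leq_subLR addn1; exact: leq_trans HXq Hs.
by rewrite (size1_polyC HsX) comp_polyC coefC.
Qed.

End Subst.


Section Geom.
Variable R : realType.
Variable K : comNzRingType.
Variable g : nat -> nat -> K.
Implicit Types (u v w : R * R).

Local Notation NP := (newton_polygon (R:=R) g).

Lemma NP_pt v : in_quadrants g v -> NP v.
Proof.
move=> H; exists 1%N, (fun _ => 1), (fun _ => v).
by rewrite !big_ord1 !mul1r; split.
Qed.

Lemma NP_corner i j : g i j != 0 -> NP (i%:R, j%:R).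
Proof. by move=> H; apply: NP_pt; exists i, j. Qed.

Lemma NP_two u w t : in_quadrants g u -> in_quadrants g w -> 0 <= t <= 1 ->
  NP (t * u.1 + (1 - t) * w.1, t * u.2 + (1 - t) * w.2).
Proof.
move=> Hu Hw /andP [Ht0 Ht1].
exists 2%N, (fun k : 'I_2 => if k == ord0 then t else 1 - t),
  (fun k : 'I_2 => if k == ord0 then u else w).
rewrite !big_ord_recl !big_ord0 /= !addr0.
split; first by move=> k; case: ifP => _ //; rewrite subr_ge0.
split; first by rewrite addrC subrK.
split; first by move=> k; case: ifP.
by [].
Qed.

Lemma NP_shift v e1 e2 : NP v -> 0 <= e1 -> 0 <= e2 -> NP (v.1 + e1, v.2 + e2).
Proof.
case=> m [lam [pts [H0 [H1 [Hq [Hv1 Hv2]]]]]] He1 He2.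
exists m, lam, (fun k => ((pts k).1 + e1, (pts k).2 + e2)).
split=> //; split=> //; split.
  move=> k; have [i [j [Hg [Hi Hj]]]] := Hq k; exists i, j; split=> //=.
  by split; [apply: le_trans Hi _; rewrite lerDl| apply: le_trans Hj _; rewrite lerDl].
have E : forall e (f : 'I_m -> R), \sum_(k < m) lam k * (f k + e) = \sum_(k < m) lam k * f k + e.
  move=> e f; rewrite (eq_bigr (fun k => lam k * f k + lam k * e)); last by move=> k _; rewrite mulrDr.
  by rewrite big_split /= -big_distrl /= H1 mul1r.
by rewrite /= !E Hv1 Hv2.
Qed.

Lemma sum_lin m (lam : 'I_m -> R) (pts : 'I_m -> R * R) (a b : R) :
  a * (\sum_(k < m) lam k * (pts k).1) + b * (\sum_(k < m) lam k * (pts k).2) =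
  \sum_(k < m) lam k * (a * (pts k).1 + b * (pts k).2).
Proof.
rewrite !big_distrr -big_split /=; apply: eq_bigr => k _; ring.
Qed.

Lemma NP_bound (a b c lo hi : R) v : 0 < a -> 0 < b ->
  (forall i j, g i j != 0 -> c <= a * i%:R + b * j%:R /\
     (a * i%:R + b * j%:R = c -> lo <= i%:R <= hi)) ->
  NP v -> c <= a * v.1 + b * v.2 /\ (a * v.1 + b * v.2 = c -> lo <= v.1 <= hi).
Proof.
move=> Ha Hb Hs [m [lam [pts [H0 [H1 [Hq [Hv1 Hv2]]]]]]].
set L := fun k => a * (pts k).1 + b * (pts k).2.
have F1 : forall k, c <= L k /\ (L k = c -> lo <= (pts k).1 <= hi).
  move=> k; have [i [j [Hg [Hi Hj]]]] := Hq k.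
  have [Hc Heq] := Hs i j Hg.
  have Hle : a * i%:R + b * j%:R <= L k.
    by rewrite /L lerD // ler_wpM2l // ltW.
  split; first exact: le_trans Hc Hle.
  move=> HL.
  have Hx : (pts k).1 = i%:R.
    apply/eqP; rewrite eq_le Hi andbT.
    have : a * ((pts k).1 - i%:R) + b * ((pts k).2 - j%:R) <= 0.
      by have HL' : a * (pts k).1 + b * (pts k).2 = c := HL; rewrite !mulrBr; lra.
    have : 0 <= b * ((pts k).2 - j%:R) by rewrite mulr_ge0 ?subr_ge0 // ltW.
    move=> Hy Hs2; have : a * ((pts k).1 - i%:R) <= 0 by lra.
    by rewrite pmulr_rle0 // subr_le0.
  rewrite Hx; apply: Heq; apply/eqP; rewrite eq_le Hc andbT.
  by move: Hle; rewrite HL.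
have HvL : a * v.1 + b * v.2 = \sum_(k < m) lam k * L k by rewrite Hv1 Hv2 sum_lin.
have HcL : c = \sum_(k < m) lam k * c by rewrite -big_distrl /= H1 mul1r.
split.
  rewrite HvL [X in X <= _]HcL; apply: ler_sum => k _.
  by apply: ler_wpM2l => //; case: (F1 k).
move=> Heq.
have Hz : \sum_(k < m) lam k * (L k - c) = 0.
  under eq_bigr do rewrite mulrBr.
  by rewrite sumrB -HvL -HcL Heq subrr.
have Hk : forall k, lam k = 0 \/ L k = c.
  move=> k.
  have Hnn : forall k', predT k' -> 0 <= lam k' * (L k' - c).
    by move=> k' _; rewrite mulr_ge0 ?subr_ge0 //; case: (F1 k').
  have := psumr_eq0P Hnn Hz (i:=k) isT.
  by move/eqP; rewrite mulf_eq0 subr_eq0 => /orP [/eqP ->|/eqP ->]; [left| right].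
have Hlo : lo = \sum_(k < m) lam k * lo by rewrite -big_distrl /= H1 mul1r.
have Hhi : hi = \sum_(k < m) lam k * hi by rewrite -big_distrl /= H1 mul1r.
rewrite Hv1; apply/andP; split.
  rewrite [X in X <= _]Hlo; apply: ler_sum => k _; case: (Hk k) => [->|HL].
    by rewrite !mul0r.
  by apply: ler_wpM2l => //; case/andP: ((F1 k).2 HL).
rewrite [X in _ <= X]Hhi; apply: ler_sum => k _; case: (Hk k) => [->|HL].
  by rewrite !mul0r.
by apply: ler_wpM2l => //; case/andP: ((F1 k).2 HL).
Qed.

Lemma split_zero (t u w : R) : 0 < t < 1 -> 0 <= u -> 0 <= w ->
  t * u + (1 - t) * w = 0 -> u = 0 /\ w = 0.
Proof.
move=> /andP [Ht0 Ht1] Hu Hw H.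
have H1 : 0 <= t * u by rewrite mulr_ge0 // ltW.
have H2 : 0 <= (1 - t) * w by rewrite mulr_ge0 // subr_ge0 ltW.
have E1 : t * u = 0 by lra.
have E2 : (1 - t) * w = 0 by lra.
have Ht' : 0 < 1 - t by rewrite subr_gt0.
split.
  by apply: (mulfI (lt0r_neq0 Ht0)); rewrite mulr0.
by apply: (mulfI (lt0r_neq0 Ht')); rewrite mulr0.
Qed.

Lemma vertex_of_bound (a b c lo hi : R) (i0 j0 : nat) : 0 < a -> 0 < b ->
  (forall i j, g i j != 0 -> c <= a * i%:R + b * j%:R /\
     (a * i%:R + b * j%:R = c -> lo <= i%:R <= hi)) ->
  g i0 j0 != 0 -> a * i0%:R + b * j0%:R = c -> (i0%:R = lo \/ i0%:R = hi) ->
  is_vertex g (i0%:R : R, j0%:R : R).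
Proof.
move=> Ha Hb Hs Hg HL Hend; split; first exact: NP_corner.
move=> [x1 y1] [x2 y2] t N1 N2 Ht [E1 E2].
have [B1 C1] := NP_bound Ha Hb Hs N1.
have [B2 C2] := NP_bound Ha Hb Hs N2.
simpl in *.
have [Z1 Z2] : a * x1 + b * y1 - c = 0 /\ a * x2 + b * y2 - c = 0.
  apply: (split_zero Ht); rewrite ?subr_ge0 //.
  by rewrite -HL E1 E2; ring.
have L1 : a * x1 + b * y1 = c by lra.
have L2 : a * x2 + b * y2 = c by lra.
have /andP [l1 h1] := C1 L1; have /andP [l2 h2] := C2 L2.
have Hx : x1 = x2.
  case: Hend => Hend.
    have [Z3 Z4] : x1 - lo = 0 /\ x2 - lo = 0.
      by apply: (split_zero Ht); rewrite ?subr_ge0 // -Hend E1; ring.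
    lra.
  have [Z3 Z4] : hi - x1 = 0 /\ hi - x2 = 0.
    by apply: (split_zero Ht); rewrite ?subr_ge0 // -Hend E1; ring.
  lra.
have Hy : y1 = y2.
  have : b * y1 = b * y2 by move: L1; rewrite Hx => L1; lra.
  by move/(mulfI (lt0r_neq0 Hb)).
by rewrite Hx Hy.
Qed.

Lemma not_vertex_mid u w v t : NP u -> NP w -> u != w -> 0 < t < 1 ->
  v = (t * u.1 + (1 - t) * w.1, t * u.2 + (1 - t) * w.2) -> ~ is_vertex g v.
Proof.
by move=> Hu Hw Huw Ht Hv [_ H]; move/eqP: Huw; apply; apply: (H u w t).
Qed.

Lemma up_not_vertex (x y0 y : R) : NP (x, y0) -> y0 < y -> NP (x, y) -> ~ is_vertex g (x, y).
Proof.
move=> H0 Hy H.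
have H2 : NP (x + 0, y + (y - y0)) by apply: (NP_shift H) => //; rewrite subr_ge0 ltW.
rewrite addr0 in H2.
apply: (not_vertex_mid H0 H2 (t := 1/2)).
- apply/negP => /eqP [E]; lra.
- apply/andP; split; lra.
- congr pair => /=; lra.
Qed.

Lemma next_vertex_of (a b c : R) (i1 j1 i2 j2 : nat) : 0 < a -> 0 < b ->
  (forall i j, g i j != 0 -> c <= a * i%:R + b * j%:R /\
     (a * i%:R + b * j%:R = c -> (i1%:R : R) <= (i%:R : R) <= (i2%:R : R))) ->
  g i1 j1 != 0 -> g i2 j2 != 0 ->
  a * i1%:R + b * j1%:R = c -> a * i2%:R + b * j2%:R = c -> (i1 < i2)%N ->
  next_vertex g (i1%:R : R, j1%:R : R) (i2%:R, j2%:R).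
Proof.
move=> Ha Hb Hs G1 G2 L1 L2 Hlt.
have Hlt' : (i1%:R : R) < i2%:R by rewrite ltr_nat.
split; first by apply: (vertex_of_bound Ha Hb Hs G1 L1); left.
split; first by apply: (vertex_of_bound Ha Hb Hs G2 L2); right.
split=> //= [[x y]] Hv /= [Hx1 Hx2].
set s := (x - i1%:R) / (i2%:R - i1%:R).
have Hd : 0 < (i2%:R : R) - i1%:R by rewrite subr_gt0.
have Hs0 : 0 < s by rewrite divr_gt0 // subr_gt0.
have Hs1 : s < 1 by rewrite ltr_pdivrMr // mul1r; lra.
have HsS : s * (i2%:R - i1%:R) = x - i1%:R by rewrite /s mulfVK // lt0r_neq0.
set Sy := (1 - s) * j1%:R + s * j2%:R.
have NS : NP ((1 - s) * i1%:R + (1 - (1 - s)) * i2%:R, (1 - s) * j1%:R + (1 - (1 - s)) * j2%:R).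
  have Q1 : in_quadrants g ((i1%:R : R), (j1%:R : R)) by exists i1, j1; split.
  have Q2 : in_quadrants g ((i2%:R : R), (j2%:R : R)) by exists i2, j2; split.
  have Ht : 0 <= 1 - s <= 1 by apply/andP; split; lra.
  exact: (NP_two Q1 Q2 Ht).
have ESx : (1 - s) * i1%:R + (1 - (1 - s)) * i2%:R = x by nra.
have ESy : (1 - s) * j1%:R + (1 - (1 - s)) * j2%:R = Sy by rewrite /Sy; ring.
rewrite ESx ESy in NS.
have LS : a * x + b * Sy = c.
  rewrite -ESx /Sy; transitivity ((1 - s) * (a * i1%:R + b * j1%:R) + s * (a * i2%:R + b * j2%:R)); first ring.
  by rewrite L1 L2; ring.
have [Bv _] := NP_bound Ha Hb Hs (proj1 Hv).
case: (ltgtP Sy y) => [Hlt2|Hgt|Heq].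
- by apply: (up_not_vertex NS Hlt2 (proj1 Hv)).
- have : b * y < b * Sy by rewrite ltr_pM2l.
  simpl in Bv; lra.
- apply: (not_vertex_mid (u := (i1%:R, j1%:R)) (w := (i2%:R, j2%:R)) (t := 1 - s)) Hv.
  + exact: NP_corner.
  + exact: NP_corner.
  + apply/negP => /eqP [E _]; lra.
  + apply/andP; split; lra.
  + by rewrite /= ESx ESy Heq.
Qed.

End Geom.


Lemma ex_minP (P : nat -> Prop) n : P n -> exists m, P m /\ forall k, P k -> (m <= k)%N.
Proof.
elim: n {-2}n (leqnn n) => [|N IH] n Hn HP.
  by move: Hn HP; rewrite leqn0 => /eqP -> HP; exists 0%N; split.
case: (classic (exists k, (k < n)%N /\ P k)) => [[k [Hk Pk]]|Hno].
  by apply: (IH k) => //; rewrite -ltnS; apply: leq_trans Hk Hn.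
exists n; split=> // k Pk; rewrite leqNgt; apply/negP => Hk; apply: Hno; by exists k.
Qed.

Lemma ex_maxP (P : nat -> Prop) n B : P n -> (forall k, P k -> (k <= B)%N) ->
  exists m, P m /\ forall k, P k -> (k <= m)%N.
Proof.
move=> Pn HB.
have Pn' : P (B - (B - n))%N by rewrite subKn // HB.
have [m' [Pm' Hm']] := @ex_minP (fun k => P (B - k)%N) (B - n)%N Pn'.
exists (B - m')%N; split=> // k Pk.
have := Hm' (B - k)%N; rewrite subKn ?HB // => /(_ Pk) H.
have := HB k Pk; lia.
Qed.

Section G1.
Variable R : realType.
Variable K : comNzRingType.
Variable q : nat -> nat -> K.
Local Notation NP := (newton_polygon (R:=R) q).

Definition ncond (a b c lo hi : nat) := forall i j, q i j != 0 ->
  (c <= a * i + b * j)%N /\ ((a * i + b * j)%N = c -> (lo <= i <= hi)%N).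

Lemma natL (a b i j : nat) : (a%:R * i%:R + b%:R * j%:R : R) = (a * i + b * j)%N%:R.
Proof. by rewrite natrD !natrM. Qed.

Lemma ncond_real a b c lo hi : ncond a b c lo hi ->
  forall i j, q i j != 0 -> (c%:R : R) <= a%:R * i%:R + b%:R * j%:R /\
     ((a%:R * i%:R + b%:R * j%:R : R) = c%:R -> (lo%:R : R) <= (i%:R : R) <= (hi%:R : R)).
Proof.
move=> H i j Hq; have [H1 H2] := H i j Hq; rewrite natL ler_nat; split=> // /eqP.
by rewrite eqr_nat => /eqP /H2; rewrite !ler_nat.
Qed.

Lemma vertex_nat a b c lo hi i0 j0 : (0 < a)%N -> (0 < b)%N -> ncond a b c lo hi ->
  q i0 j0 != 0 -> (a * i0 + b * j0)%N = c -> i0 = lo \/ i0 = hi ->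
  is_vertex q (i0%:R : R, j0%:R : R).
Proof.
move=> Ha Hb Hc Hq HL Hend.
apply: (vertex_of_bound (a := a%:R) (b := b%:R) (c := c%:R) (lo := lo%:R) (hi := hi%:R)).
- by rewrite ltr0n.
- by rewrite ltr0n.
- exact: ncond_real.
- exact: Hq.
- by rewrite natL HL.
- by case: Hend => ->; [left| right].
Qed.

Lemma NP_bound_nat a b c lo hi X Y : (0 < a)%N -> (0 < b)%N -> ncond a b c lo hi ->
  NP (X%:R, Y%:R) -> (c <= a * X + b * Y)%N /\ ((a * X + b * Y)%N = c -> (lo <= X <= hi)%N).
Proof.
move=> Ha Hb Hc HN.
have := NP_bound (a := a%:R) (b := b%:R) (c := c%:R) (lo := lo%:R) (hi := hi%:R) _ _ (ncond_real Hc) HN.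
rewrite !ltr0n => /(_ Ha Hb) /= [H1 H2]; rewrite natL ler_nat in H1; split=> // HL.
by have := H2; rewrite natL HL => /(_ erefl); rewrite !ler_nat.
Qed.

Lemma corner_NP i j : q i j != 0 -> NP (i%:R, j%:R).
Proof. exact: NP_corner. Qed.

Lemma vertex_NP v : is_vertex q v -> NP v.
Proof. by case. Qed.

Variables (gam d C D : nat).
Hypothesis Hnz : exists i j, q i j != 0.
Hypothesis Hv1 : is_vertex q (gam%:R : R, d%:R : R).
Hypothesis Hfirst : forall u : R * R, is_vertex q u -> gam%:R <= u.1.
Hypothesis Hsec : next_vertex q (gam%:R : R, d%:R : R) (C%:R, D%:R).

Lemma G1_left : q gam d != 0 /\ forall i j, q i j != 0 -> (gam <= i)%N.
Proof.
have [i1 [j1 H1]] := Hnz.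
have [i0 [[j' Hj'] Hi0]] := @ex_minP (fun i => exists j, q i j != 0) i1 (ex_intro _ j1 H1).
have [j0 [Hq0 Hj0]] := @ex_minP (fun j => q i0 j != 0) j' Hj'.
pose Kc := (j0 + d + 1)%N.
have HK : (0 < Kc)%N by rewrite /Kc addn1.
have Hc : ncond Kc 1 (Kc * i0 + j0) i0 (Kc * i0 + j0).
  move=> i j Hq; have Hi := Hi0 i (ex_intro _ j Hq).
  have Hle : (Kc * i0 + j0 <= Kc * i + 1 * j)%N.
    have [Hlt|Heq] : (i0 < i)%N \/ i0 = i.
      by move: Hi; rewrite leq_eqVlt => /orP [/eqP->|->]; [right|left].
      have := leq_mul (leqnn Kc) Hlt; rewrite mulnS /Kc; lia.
    by rewrite -Heq mul1n leq_add2l; apply: Hj0; rewrite Heq.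
  split=> // HL; rewrite Hi /=; have : (i <= Kc * i)%N by rewrite leq_pmull.
  lia.
have Hv0 : is_vertex q (i0%:R : R, j0%:R : R).
  by apply: (vertex_nat (lo := i0) (hi := Kc * i0 + j0) HK _ Hc Hq0) => //; [rewrite mul1n| left].
have Hg : (gam <= i0)%N by have := Hfirst Hv0; rewrite /= ler_nat.
have [B1 _] := NP_bound_nat HK (ltn0Sn 0) Hc (vertex_NP Hv1).
have Hgi : gam = i0.
  apply/eqP; rewrite eqn_leq Hg /=; rewrite leqNgt; apply/negP => Hlt.
  have := leq_mul (leqnn Kc) Hlt; rewrite mulnS /Kc in B1 *; lia.
subst i0.
have Hdj : (j0 <= d)%N by move: B1; rewrite mul1n leq_add2l.
have Hjd : j0 = d.
  apply/eqP; rewrite eqn_leq Hdj /= leqNgt; apply/negP => Hlt.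
  apply: (up_not_vertex (corner_NP Hq0) _ (vertex_NP Hv1) Hv1).
  by rewrite ltr_nat.
subst j0; split=> // i j Hq; exact: Hi0 i (ex_intro _ j Hq).
Qed.


Lemma G1_lt : (gam < C)%N.
Proof. by case: Hsec => _ [_ [H _]]; move: H; rewrite /= ltr_nat. Qed.

Lemma vC : is_vertex q (C%:R : R, D%:R : R).
Proof. by case: Hsec => _ [H _]. Qed.

Lemma G1_Dd : (D < d)%N.
Proof.
rewrite ltnNge; apply/negP => HdD.
have [Hqg _] := G1_left.
have N1 : NP (gam%:R + 0, d%:R + (D%:R - d%:R)).
  by apply: NP_shift (corner_NP Hqg) _ _ => //; rewrite subr_ge0 ler_nat.
have N2 : NP (C%:R + (C%:R - gam%:R), D%:R + 0).
  apply: NP_shift (vertex_NP vC) _ _ => //; rewrite subr_ge0 ler_nat ltnW //; exact: G1_lt.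
have HgC : (gam%:R : R) < C%:R by rewrite ltr_nat G1_lt.
apply: (not_vertex_mid N1 N2 (t := 1/2) _ _ _ vC).
- apply/negP => /eqP [E _]; lra.
- apply/andP; split; lra.
- congr pair => /=; lra.
Qed.

Definition al := (d - D)%N.
Definition be := (C - gam)%N.
Definition cc := (al * gam + be * d)%N.

Lemma al_pos : (0 < al)%N. Proof. by rewrite /al subn_gt0 G1_Dd. Qed.
Lemma be_pos : (0 < be)%N. Proof. by rewrite /be subn_gt0 G1_lt. Qed.
Lemma ccCD : (al * C + be * D)%N = cc.
Proof.
rewrite /cc /al /be.
have -> : C = (gam + (C - gam))%N by rewrite subnKC // ltnW // G1_lt.
have -> : d = (D + (d - D))%N by rewrite subnKC // ltnW // G1_Dd.
rewrite !addKn; ring.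
Qed.

Lemma real_combo (g' x' C' s : R) : x' != g' -> s = (C' - g') / (x' - g') ->
  (1 - s) * g' + (1 - (1 - s)) * x' = C'.
Proof.
move=> Hx Hs.
have H : s * (x' - g') = C' - g' by rewrite Hs mulfVK // subr_eq0.
nra.
Qed.

Lemma G1_SP2 : forall i j, q i j != 0 -> (cc <= al * i + be * j)%N.
Proof.
move=> i1 j1 Hq1; rewrite leqNgt; apply/negP => Hlt.
have [Hqg Hleft] := G1_left.
have Ha := al_pos; have Hb := be_pos.
have [m0 [[im' [jm' [Hqm' Hm']]] Hmin]] :=
  @ex_minP (fun k => exists i j, q i j != 0 /\ (al * i + be * j)%N = k) _
  (ex_intro _ i1 (ex_intro _ j1 (conj Hq1 erefl))).
have [im [[jm [Hqm Hm]] Himin]] :=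
  @ex_minP (fun i => exists j, q i j != 0 /\ (al * i + be * j)%N = m0) im'
  (ex_intro _ jm' (conj Hqm' Hm')).
have Hc : ncond al be m0 im m0.
  move=> i j Hq; split; first by apply: Hmin; exists i, j.
  move=> HL; rewrite Himin /=; last by exists j.
  by rewrite -HL; apply: leq_trans (leq_addr _ _); rewrite leq_pmull.
have Hvm : is_vertex q (im%:R : R, jm%:R : R) by apply: (vertex_nat Ha Hb Hc Hqm Hm); left.
have Hm0c : (m0 < cc)%N.
  by apply: leq_ltn_trans Hlt; apply: Hmin; exists i1, j1.
have Hgi : (gam <= im)%N by have := Hfirst Hvm; rewrite /= ler_nat.
have Hcc := ccCD.
case: (ltngtP im C) => [HimC|HimC|HimC].
- move: Hgi; rewrite leq_eqVlt => /orP [/eqP Hgi|Hgi].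
    subst im.
    have Hj : (jm < d)%N.
      by rewrite -(ltn_pmul2l Hb) -(ltn_add2l (al * gam)); rewrite Hm -/cc.
    by apply: (up_not_vertex (corner_NP Hqm) _ (vertex_NP Hv1) Hv1); rewrite ltr_nat.
  case: Hsec => _ [_ [_ H]]; apply: (H _ Hvm) => /=; rewrite !ltr_nat; split=> //.
-
  set s : R := (C%:R - gam%:R) / (im%:R - gam%:R).
  have HgC := G1_lt.
  have Hgim : (gam < im)%N by apply: leq_ltn_trans HimC; apply: ltnW.
  have Hd : (0 : R) < im%:R - gam%:R by rewrite subr_gt0 ltr_nat.
  have Hs0 : 0 < s by rewrite divr_gt0 // subr_gt0 ltr_nat.
  have Hs1 : s < 1 by rewrite ltr_pdivrMr // mul1r ltrD2r ltr_nat.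
  have Q1 : in_quadrants q ((gam%:R : R), (d%:R : R)) by exists gam, d; split.
  have Q2 : in_quadrants q ((im%:R : R), (jm%:R : R)) by exists im, jm; split.
  have Ht : 0 <= 1 - s <= 1 by apply/andP; split; lra.
  have NS := NP_two Q1 Q2 Ht; simpl in NS.
  rewrite (@real_combo gam%:R im%:R C%:R s) in NS; last by []; last first.
    by rewrite eqr_nat neq_ltn Hgim orbT.
  set Sy := (1 - s) * d%:R + (1 - (1 - s)) * jm%:R in NS.
  have LS : al%:R * C%:R + be%:R * Sy = (1 - s) * cc%:R + s * m0%:R :> R.
    have E1 : (cc%:R : R) = al%:R * gam%:R + be%:R * d%:R by rewrite natL.
    have E2 : (m0%:R : R) = al%:R * im%:R + be%:R * jm%:R by rewrite natL Hm.
    have E3 : (1 - s) * gam%:R + (1 - (1 - s)) * im%:R = (C%:R : R).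
      by apply: real_combo => //; rewrite eqr_nat neq_ltn Hgim orbT.
    rewrite E1 E2 /Sy -E3; ring.
  have Hm0cR : (m0%:R : R) < cc%:R by rewrite ltr_nat.
  have LD : (al%:R * C%:R + be%:R * D%:R : R) = cc%:R by rewrite natL Hcc.
  have HbR : (0 : R) < be%:R by rewrite ltr0n.
  have HSy : Sy < D%:R.
    have : be%:R * Sy < be%:R * D%:R :> R by nra.
    by rewrite ltr_pM2l.
  exact: (up_not_vertex NS HSy (vertex_NP vC) vC).
- subst im.
  have Hj : (jm < D)%N.
    by rewrite -(ltn_pmul2l Hb) -(ltn_add2l (al * C)) Hm Hcc.
  by apply: (up_not_vertex (corner_NP Hqm) _ (vertex_NP vC) vC); rewrite ltr_nat.
Qed.


Lemma G1_SP3 : forall i j, q i j != 0 -> (al * i + be * j)%N = cc -> (i <= C)%N.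
Proof.
move=> i j Hq HL; rewrite leqNgt; apply/negP => HiC.
have [Hqg Hleft] := G1_left.
have Hb := be_pos; have HgC := G1_lt.
have Hgi : (gam < i)%N by apply: ltn_trans HiC.
set s : R := (C%:R - gam%:R) / (i%:R - gam%:R).
have Hd : (0 : R) < i%:R - gam%:R by rewrite subr_gt0 ltr_nat.
have Hs0 : 0 < s by rewrite divr_gt0 // subr_gt0 ltr_nat.
have Hs1 : s < 1 by rewrite ltr_pdivrMr // mul1r ltrD2r ltr_nat.
have E3 : (1 - s) * gam%:R + (1 - (1 - s)) * i%:R = (C%:R : R).
  by apply: real_combo => //; rewrite eqr_nat neq_ltn Hgi orbT.
have HbR : (0 : R) < be%:R by rewrite ltr0n.
have E4 : (1 - s) * d%:R + (1 - (1 - s)) * j%:R = (D%:R : R).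
  apply: (mulfI (lt0r_neq0 HbR)).
  have E1 : (cc%:R : R) = al%:R * gam%:R + be%:R * d%:R by rewrite natL.
  have E2 : (cc%:R : R) = al%:R * i%:R + be%:R * j%:R by rewrite natL HL.
  have LD : (al%:R * C%:R + be%:R * D%:R : R) = cc%:R by rewrite natL ccCD.
  rewrite -E3 in LD.
  nra.
apply: (not_vertex_mid (u := (gam%:R, d%:R)) (w := (i%:R, j%:R)) (t := 1 - s)) vC.
- exact: corner_NP.
- exact: corner_NP.
- by apply/negP => /eqP [/eqP]; rewrite eqr_nat => /eqP E; move: Hgi; rewrite E ltnn.
- apply/andP; split; lra.
- by rewrite /= E3 E4.
Qed.

Lemma G1_CD : q C D != 0.
Proof.
have [Hqg Hleft] := G1_left.
have Ha := al_pos; have Hb := be_pos.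
have [ix [[jx [Hqx Hx]] Hxmax]] :=
  @ex_maxP (fun i => exists j, q i j != 0 /\ (al * i + be * j)%N = cc) gam C
  (ex_intro _ d (conj Hqg erefl))
  (fun k '(ex_intro j (conj Hq HL)) => G1_SP3 Hq HL).
have Hc : ncond al be cc gam ix.
  move=> i j Hq; split; first exact: G1_SP2.
  by move=> HL; rewrite (Hleft i j Hq) /=; apply: Hxmax; exists j.
have [_ HB] := NP_bound_nat Ha Hb Hc (vertex_NP vC).
have /andP [_ HCix] := HB ccCD.
have HixC : (ix <= C)%N := G1_SP3 Hqx Hx.
have Eix : ix = C by apply/eqP; rewrite eqn_leq HixC HCix.
subst ix.
have Ej : jx = D.
  apply/eqP; rewrite -(eqn_pmul2l Hb) -(eqn_add2l (al * C)) Hx ccCD //.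
by rewrite -Ej.
Qed.

End G1.


Section Stab.
Variable F : fieldType.
Local Notation P2 := {poly {poly F}}.
Variables (p : nat -> F) (q : nat -> nat -> F).
Hypothesis Hp0 : p 0%N = 0.
Hypothesis Hq00 : q 0%N 0%N = 0.

Lemma coef_trunc1 N i : (Defs.trunc1 N p)`_i = if (i <= N)%N then p i else 0.
Proof. by rewrite /Defs.trunc1 coef_poly ltnS. Qed.

Lemma coef2_trunc2 N (g : nat -> nat -> F) i j :
  coef2 (trunc2 N g) i j = if (i + j <= N)%N then g i j else 0.
Proof.
rewrite /coef2 /trunc2 coef_poly ltnS.
case: (leqP (i + j) N) => H.
  have Hj : (j <= N)%N by apply: leq_trans H; apply: leq_addl.
  have Hi : (i <= N)%N by apply: leq_trans H; apply: leq_addr.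
  by rewrite Hj coef_poly ltnS Hi H.
case: ifP => _; last by rewrite coef0.
rewrite coef_poly; case: ifP => _ //; by rewrite leqNgt H.
Qed.

Lemma coef2X i j : coef2 ('X : P2) i j = if (i == 0%N) && (j == 1%N) then 1 else 0.
Proof.
rewrite /coef2 coefX; case: (j =P 1%N) => _ /=; last by rewrite coef0 andbF.
by rewrite coefC andbT.
Qed.

Lemma pit_wge1 N n : wge 1 1 1 ((pit N p n)%:P).
Proof.
elim: n => [|n IH] /=.
  move=> i j; rewrite coef2_polyC coefX.
  by case: (j =P 0%N) => [->|_]; [case: (i =P 1%N) => [->|_] //; rewrite eqxx| rewrite eqxx].
rewrite (comp_subst2 _ _ 0); apply: (subst_wge (u := 1%N) (v := 1%N)) => //; last first.
  exact: wge0.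
move=> i j; rewrite coef2_polyC coef_trunc1.
case: (j =P 0%N) => [->|_]; last by rewrite eqxx.
case: ifP => _; last by rewrite eqxx.
case: i => //; rewrite Hp0 eqxx //.
Qed.

Lemma Qit_wge1 N n : wge 1 1 1 (Qit N p q n).
Proof.
elim: n => [|n IH] /=.
  move=> i j; rewrite coef2X.
  by case: (i =P 0%N) => [->|_] /=; case: (j =P 1%N) => [->|_] //; rewrite eqxx.
apply: (subst_wge (u := 1%N) (v := 1%N)) => //; last exact: pit_wge1.
move=> i j; rewrite coef2_trunc2; case: ifP => _; last by rewrite eqxx.
by case: i => [|i]; case: j => [|j] //; rewrite Hq00 eqxx.
Qed.

Lemma wge_tri a b k (X Y Z : P2) : wge a b k (X - Z) -> wge a b k (Z - Y) -> wge a b k (X - Y).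
Proof.
move=> H1 H2; have -> : X - Y = (X - Z) + (Z - Y) by rewrite addrA subrK.
exact: wgeD.
Qed.

Lemma pit_stable N M n : (N <= M)%N -> wge 1 1 N.+1 ((pit N p n)%:P - (pit M p n)%:P).
Proof.
move=> HNM; elim: n => [|n IH] /=; first by rewrite subrr; apply: wge0.
rewrite !(comp_subst2 _ _ 0).
apply: (wge_tri (Z := subst2 (Defs.trunc1 M p)%:P (pit N p n) 0)); last first.
  by apply: subst_diff => //; rewrite subrr; apply: wge0.
rewrite -subst2B; apply: (subst_wge (u := 1%N) (v := 1%N)); last 2 first.
- exact: pit_wge1.
- exact: wge0.
move=> i j; rewrite -polyCB coef2_polyC coefB !coef_trunc1.
case: (j =P 0%N) => [->|_]; last by rewrite eqxx.
case: ifP => H1; case: ifP => H2; rewrite ?subrr ?eqxx //.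
- by move: (leq_trans H1 HNM); rewrite H2.
- by move=> _; rewrite mul1n muln0 addn0 ltnNge H1.
Qed.

Lemma Qit_stable N M n : (N <= M)%N -> wge 1 1 N.+1 (Qit N p q n - Qit M p q n).
Proof.
move=> HNM; elim: n => [|n IH] /=; first by rewrite subrr; apply: wge0.
apply: (wge_tri (Z := subst2 (trunc2 M q) (pit N p n) (Qit N p q n))); last first.
  by apply: subst_diff => //; apply: pit_stable.
rewrite -subst2B; apply: (subst_wge (u := 1%N) (v := 1%N)); last 2 first.
- exact: pit_wge1.
- exact: Qit_wge1.
move=> i j; rewrite coef2B !coef2_trunc2.
case: ifP => H1; case: ifP => H2; rewrite ?subrr ?eqxx //.
- by move: (leq_trans H1 HNM); rewrite H2.
- by move=> _; rewrite !mul1n ltnNge H1.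
Qed.

Lemma Qn_eq M n i j : (i + j <= M)%N -> Qn p q n i j = coef2 (Qit M p q n) i j.
Proof.
move=> H; rewrite /Qn; apply/eqP; rewrite -subr_eq0 -coef2B.
apply/negP => /negP Hn; have := Qit_stable (n:=n) H Hn; rewrite !mul1n; lia.
Qed.

End Stab.


Section Main.
Variable F : fieldType.
Local Notation P2 := {poly {poly F}}.
Variables (p : nat -> F) (q : nat -> nat -> F) (delta gam d C D : nat).
Hypothesis Hdelta : (0 < delta)%N.
Hypothesis Hp_low : forall i, (i < delta)%N -> p i = 0.
Hypothesis Hp_lead : p delta != 0.
Hypothesis Hq00 : q 0%N 0%N = 0.
Hypothesis HgC : (gam < C)%N.
Hypothesis HDd : (D < d)%N.
Local Notation al := (d - D)%N.
Local Notation be := (C - gam)%N.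
Local Notation cc := (al * gam + be * d)%N.
Hypothesis SP1 : forall i j, q i j != 0 -> (gam <= i)%N.
Hypothesis SP2 : forall i j, q i j != 0 -> (cc <= al * i + be * j)%N.
Hypothesis SP3 : forall i j, q i j != 0 -> (al * i + be * j)%N = cc -> (i <= C)%N.
Hypothesis Hqg : q gam d != 0.
Hypothesis HqC : q C D != 0.
Hypothesis HccCD : (al * C + be * D)%N = cc.

Lemma poly_neq0_coef (R : nzRingType) (P : {poly R}) k : P`_k != 0 -> P != 0.
Proof. by apply: contraNneq => ->; rewrite coef0. Qed.

Lemma al_gt0 : (0 < al)%N. Proof. by rewrite subn_gt0. Qed.
Lemma be_gt0 : (0 < be)%N. Proof. by rewrite subn_gt0. Qed.
Lemma Hp0 : p 0%N = 0. Proof. exact: Hp_low. Qed.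

Lemma coef2_mono (c : F) k i j :
  coef2 ((c *: 'X^k)%:P : P2) i j = if (j == 0%N) && (i == k) then c else 0.
Proof.
rewrite coef2_polyC; case: (j =P 0%N) => _ //=.
by rewrite coefZ coefXn; case: (i =P k) => _; rewrite ?mulr1 ?mulr0.
Qed.

Lemma hom_mono a b (c : F) k : hom a b (a * k) ((c *: 'X^k)%:P : P2).
Proof.
move=> i j; rewrite coef2_mono; case: (j =P 0%N) => [->|_] /=; last by rewrite eqxx.
by case: (i =P k) => [->|_]; rewrite ?eqxx // muln0 addn0.
Qed.

Lemma pit_inv M n : (delta <= M)%N ->
  exists a, a != 0 /\ wge 1 1 (delta ^ n).+1 ((pit M p n - a *: 'X^(delta ^ n))%:P).
Proof.
move=> HM; elim: n => [|n [a [Ha IH]]] /=.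
  by exists 1; rewrite oner_eq0 expn0 scale1r expr1 subrr; split=> //; apply: wge0.
set V := (delta ^ n)%N.
have HV : (0 < V)%N by rewrite expn_gt0 Hdelta.
have O1 : wge V 1 (V * delta).+1 ((Defs.trunc1 M p)%:P - (p delta *: 'X^delta)%:P : P2).
  rewrite -polyCB => i j; rewrite coef2_polyC.
  case: (j =P 0%N) => [->|_]; last by rewrite eqxx.
  rewrite coefB coef_trunc1 coefZ coefXn muln0 addn0.
  case: (ltngtP i delta) => [Hi|Hi|->].
  + by rewrite Hp_low // if_same mulr0 subr0 eqxx.
  + move=> _; have := leq_mul (leqnn V) Hi; rewrite mulnS; lia.
  + by rewrite HM mulr1 subrr eqxx.
have O2 : hom V 1 (V * delta) ((p delta *: 'X^delta)%:P : P2).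
  move=> i j; rewrite coef2_mono; case: (j =P 0%N) => [->|_] /=; last by rewrite eqxx.
  by case: (i =P delta) => [->|_]; rewrite ?eqxx // muln0 addn0 mulnC.
have O3 : approx 1 1 V ((pit M p n)%:P : P2) ((a *: 'X^V)%:P) by rewrite /approx -polyCB.
have O4 : hom 1 1 V ((a *: 'X^V)%:P : P2) by have := hom_mono 1 1 (c := a) (k := V); rewrite mul1n.
have O5 : approx 1 1 1 (0 : P2) 0 by rewrite /approx subrr; apply: wge0.
have O6 : hom 1 1 1 (0 : P2) by exact: hom0.
have := subst_approx O1 O2 O3 O4 O5 O6.
rewrite -!comp_subst2 comp_polyZ comp_Xn_poly exprZn -exprM scalerA => H.
exists (p delta * a ^+ delta); split; first by rewrite mulf_neq0 // expf_neq0.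
by rewrite expnSr polyCB; exact: H.
Qed.

Lemma pit_approx M n : (delta <= M)%N ->
  exists a, a != 0 /\ approx al be (al * delta ^ n) ((pit M p n)%:P) ((a *: 'X^(delta ^ n))%:P).
Proof.
move=> HM; have [a [Ha H]] := pit_inv n HM; exists a; split=> //.
rewrite /approx -polyCB; apply: (wge_le (c := (al * (delta ^ n).+1)%N)).
  by rewrite mulnS; have := al_gt0; lia.
apply: wge_const_scale => //; exact: al_gt0.
Qed.

Lemma Dstep M n (Ep : P2) cp Tp Bp V a (q0 : P2) m Tq Bq :
  approx al be cp (Qit M p q n) Ep -> hom al be cp Ep -> top Ep Tp -> bot Ep Bp -> (0 < Tp)%N ->
  approx al be (al * V) ((pit M p n)%:P) ((a *: 'X^V)%:P) -> a != 0 -> (0 < V)%N ->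
  wge (al * V) cp m.+1 (trunc2 M q - q0) -> hom (al * V) cp m q0 -> top q0 Tq -> bot q0 Bq ->
  (0 < Bp)%N || (size q0 <= Bq.+1)%N ->
  approx al be m (Qit M p q n.+1) (subst2 q0 (a *: 'X^V) Ep) /\
  hom al be m (subst2 q0 (a *: 'X^V) Ep) /\
  top (subst2 q0 (a *: 'X^V) Ep) (Tq * Tp) /\ bot (subst2 q0 (a *: 'X^V) Ep) (Bp * Bq).
Proof.
move=> HQ HEp HT HB HTp HA Ha HV Hq Hq0 HTq HBq Hcase.
have HA0 : hom al be (al * V) ((a *: 'X^V)%:P) by apply: hom_mono.
have Hsz : (1 < size (a *: 'X^V))%N by rewrite size_scale // size_polyXn ltnS.
split; first exact: (subst_approx Hq Hq0 HA HA0 HQ HEp).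
split; first exact: (hom_subst Hq0 HA0 HEp).
split; first exact: top_subst.
exact: bot_subst.
Qed.

Definition Eq : P2 := \poly_(j < d.+1) \poly_(i < C.+1) (if (al * i + be * j == cc)%N then q i j else 0).

Lemma coef2_Eq i j : coef2 Eq i j =
  if [&& (j <= d)%N, (i <= C)%N & (al * i + be * j == cc)%N] then q i j else 0.
Proof.
rewrite /coef2 /Eq coef_poly ltnS; case: (leqP j d) => Hj /=; last by rewrite coef0.
by rewrite coef_poly ltnS; case: (leqP i C).
Qed.

Lemma hom_Eq : hom al be cc Eq.
Proof.
move=> i j; rewrite coef2_Eq; case: (al * i + be * j =P cc) => [//|_].
by rewrite !andbF eqxx.
Qed.

Lemma edge_jd i j : q i j != 0 -> (al * i + be * j)%N = cc -> (j <= d)%N.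
Proof.
move=> Hq HL; have Hg := SP1 Hq.
have : (be * j <= be * d)%N.
  have := leq_mul (leqnn al) Hg; lia.
by rewrite leq_pmul2l // be_gt0.
Qed.

Lemma wge_Eq M : (C + d <= M)%N -> wge al be cc.+1 (trunc2 M q - Eq).
Proof.
move=> HM i j; rewrite coef2B coef2_trunc2 coef2_Eq.
case: (al * i + be * j =P cc) => [HL|HL].
  case: (eqVneq (q i j) 0) => [->|Hq]; first by rewrite !if_same subrr eqxx.
  have Hj := edge_jd Hq HL; have Hi := SP3 Hq HL.
  have Hij : (i + j <= M)%N by apply: leq_trans HM; apply: leq_add.
  by rewrite Hij Hj Hi /= subrr eqxx.
rewrite !andbF subr0; case: ifP => _; last by rewrite eqxx.
move=> /SP2 H; rewrite ltn_neqAle H andbT; apply/eqP => E; exact: HL (esym E).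
Qed.

Lemma top_Eq : top Eq d.
Proof.
rewrite /top /Eq size_poly_eq //=; apply: (poly_neq0_coef (k := gam)).
by rewrite coef_poly ltnS (ltnW HgC) eqxx.
Qed.

Lemma bot_Eq : bot Eq D.
Proof.
split.
  move=> j Hj; apply/polyP => i; rewrite coef0 -[_`_i]/(coef2 Eq i j) coef2_Eq.
  case: (eqVneq (q i j) 0) => [->|Hq]; first by rewrite if_same.
  case: (al * i + be * j =P cc) => [HL|_]; last by rewrite !andbF.
  have Hi := SP3 Hq HL; exfalso.
  have : (be * D <= be * j)%N.
    have := leq_mul (leqnn al) Hi; lia.
  by rewrite leq_pmul2l ?be_gt0 // leqNgt Hj.
apply: (poly_neq0_coef (k := C)); rewrite -[_`_C]/(coef2 Eq C D) coef2_Eq.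
by rewrite (ltnW HDd) leqnn HccCD eqxx.
Qed.

Definition Mq : P2 := (q gam d *: 'X^gam)%:P * 'X^d.

Lemma Mq_scale : Mq = (q gam d *: 'X^gam) *: 'X^d.
Proof. by rewrite /Mq mul_polyC. Qed.

Lemma coef2_Mq i j : coef2 Mq i j = if (i == gam) && (j == d) then q gam d else 0.
Proof.
rewrite /coef2 Mq_scale coefZ coefXn; case: (j =P d) => _; last by rewrite mulr0 coef0 andbF.
by rewrite mulr1 coefZ coefXn andbT; case: (i =P gam) => _; rewrite ?mulr1 ?mulr0.
Qed.

Lemma hom_Mq u v : hom u v (u * gam + v * d) Mq.
Proof.
move=> i j; rewrite coef2_Mq; case: (i =P gam) => [->|_] /=; last by rewrite eqxx.
by case: (j =P d) => [->|_] //=; rewrite eqxx.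
Qed.

Lemma top_Mq : top Mq d.
Proof.
rewrite /top Mq_scale size_scale ?size_polyXn //.
by apply: (poly_neq0_coef (k := gam)); rewrite coefZ coefXn eqxx mulr1.
Qed.

Lemma bot_Mq : bot Mq d.
Proof.
split.
  by move=> j Hj; rewrite Mq_scale coefZ coefXn (ltn_eqF Hj) mulr0.
rewrite Mq_scale coefZ coefXn eqxx mulr1.
by apply: (poly_neq0_coef (k := gam)); rewrite coefZ coefXn eqxx mulr1.
Qed.

Lemma wge_Mq M u v : (gam + d <= M)%N ->
  (forall i j, q i j != 0 -> (i != gam) || (j != d) -> (u * gam + v * d < u * i + v * j)%N) ->
  wge u v (u * gam + v * d).+1 (trunc2 M q - Mq).
Proof.
move=> HM Hs i j; rewrite coef2B coef2_trunc2 coef2_Mq.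
case: (i =P gam) => [Ei|Ei]; case: (j =P d) => [Ej|Ej] /=.
- by subst i j; rewrite HM subrr eqxx.
- rewrite subr0; case: ifP => _; last by rewrite eqxx.
  move=> Hq; apply: Hs => //; apply/orP; right; exact/eqP.
- rewrite subr0; case: ifP => _; last by rewrite eqxx.
  move=> Hq; apply: Hs => //; apply/orP; left; exact/eqP.
- rewrite subr0; case: ifP => _; last by rewrite eqxx.
  move=> Hq; apply: Hs => //; apply/orP; left; exact/eqP.
Qed.

Fixpoint cs n := if n is n'.+1 then (al * gam * delta ^ n' + d * cs n')%N else be.

Lemma cs_pos n : (0 < cs n)%N.
Proof.
elim: n => [|n IH] /=; first exact: be_gt0.
by apply: leq_trans (leq_addl _ _); rewrite muln_gt0 IH andbT (leq_ltn_trans _ HDd).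
Qed.

Lemma Xtop : top ('X : P2) 1. Proof. by rewrite /top size_polyX. Qed.
Lemma Xbot : bot ('X : P2) 1.
Proof. split; [by case=> // _; rewrite coefX | by rewrite coefX eqxx oner_eq0]. Qed.
Lemma Xhom : hom al be be ('X : P2).
Proof.
move=> i j; rewrite coef2X; case: (i =P 0%N) => [->|_] /=; last by rewrite eqxx.
by case: (j =P 1%N) => [->|_]; rewrite ?eqxx // muln0 muln1.
Qed.

Lemma inv_base M : (C + d <= M)%N ->
  exists E, approx al be cc (Qit M p q 1) E /\ hom al be cc E /\ top E d /\ bot E D.
Proof.
move=> HM.
have HA : approx al be (al * 1) ((pit M p 0)%:P) ((1 *: 'X^1)%:P).
  by rewrite /= scale1r expr1 /approx subrr; apply: wge0.
have HQ : approx al be be (Qit M p q 0) 'X by rewrite /approx subrr; apply: wge0.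
have W1 : wge (al * 1) be cc.+1 (trunc2 M q - Eq) by rewrite muln1; apply: wge_Eq.
have W2 : hom (al * 1) be cc Eq by rewrite muln1; exact: hom_Eq.
have [H1 [H2 [H3 H4]]] := Dstep HQ Xhom Xtop Xbot (ltn0Sn 0) HA (oner_neq0 _) (ltn0Sn 0)
  W1 W2 top_Eq bot_Eq (ltn0Sn 0).
by exists (subst2 Eq (1 *: 'X^1) 'X); rewrite muln1 mul1n in H3 H4.
Qed.


Lemma strict_i V v i j : (0 < V)%N -> (0 < v)%N -> (v < be * V)%N -> q i j != 0 ->
  (i != gam) || (j != d) -> (al * V * gam + v * d < al * V * i + v * j)%N.
Proof.
move=> HV Hv HvV Hq Hne; have Hg := SP1 Hq; have H2 := SP2 Hq.
have Ha := al_gt0.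
case: (leqP d j) => Hdj.
  case: (ltnP gam i) => Hgi.
    have : (al * V * gam < al * V * i)%N by rewrite ltn_pmul2l // muln_gt0 Ha HV.
    have := leq_mul (leqnn v) Hdj; lia.
  have Eg : i = gam by apply/eqP; rewrite eqn_leq Hgi Hg.
  subst i; move: Hne; rewrite eqxx /= => Hjd.
  have : (d < j)%N by rewrite ltn_neqAle eq_sym Hjd Hdj.
  move=> Hdj'; have := ltn_pmul2l Hv; move=> /(_ d j); rewrite Hdj' => H; lia.
have H3 := leq_mul H2 (leqnn V).
have H4 : (v * (d - j) < be * V * (d - j))%N by rewrite ltn_pmul2r // subn_gt0.
nia.
Qed.

Section CaseI.
Hypothesis Hi : (cc < be * delta)%N.

Lemma cs_le n : (cs n <= be * delta ^ n)%N /\ ((0 < n)%N -> (cs n < be * delta ^ n)%N).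
Proof.
elim: n => [|n [IH _]] /=; first by rewrite expn0 muln1.
have HV : (0 < delta ^ n)%N by rewrite expn_gt0 Hdelta.
have H1 : (al * gam * delta ^ n + d * cs n <= cc * delta ^ n)%N.
  have := leq_mul (leqnn d) IH; nia.
have H2 : (cc * delta ^ n < be * delta ^ n.+1)%N by rewrite expnS mulnA ltn_pmul2r.
split; first exact: ltnW (leq_ltn_trans H1 H2).
by move=> _; exact: leq_ltn_trans H1 H2.
Qed.

Lemma Inv1 M n : (C + d <= M)%N -> (gam + d <= M)%N -> (delta <= M)%N -> (0 < n)%N ->
  exists E, approx al be (cs n) (Qit M p q n) E /\ hom al be (cs n) E /\
    top E (d ^ n) /\ bot E (D * d ^ n.-1).
Proof.
move=> HM1 HM2 HM3; elim: n => [//|n IH] _.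
case: n IH => [|n] IH.
  have [E [H1 [H2 [H3 H4]]]] := inv_base HM1.
  have -> : cs 1 = cc by rewrite /= expn0 muln1 (mulnC d).
  by exists E; rewrite expn1 expn0 muln1.
have [E [H1 [H2 [H3 H4]]]] := IH erefl.
have [a [Ha HA]] := pit_approx n.+1 HM3.
set V := (delta ^ n.+1)%N in HA.
have HV : (0 < V)%N by rewrite expn_gt0 Hdelta.
have Hs : forall i j, q i j != 0 -> (i != gam) || (j != d) ->
    (al * V * gam + cs n.+1 * d < al * V * i + cs n.+1 * j)%N.
  move=> i j Hq Hne; apply: strict_i => //; first exact: cs_pos.
  by apply: (proj2 (cs_le n.+1)).
have W1 := wge_Mq HM2 Hs.
have W2 := hom_Mq (al * V) (cs n.+1).
have HT : (0 < d ^ n.+1)%N by rewrite expn_gt0 (leq_ltn_trans _ HDd).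
have Hsz : (0 < D * d ^ n)%N || (size Mq <= d.+1)%N by apply/orP; right; rewrite top_Mq.
have [R1 [R2 [R3 R4]]] := Dstep H1 H2 H3 H4 HT HA Ha HV W1 W2 top_Mq bot_Mq Hsz.
have Ecs : (al * V * gam + cs n.+1 * d)%N = cs n.+2 by rewrite /= /V; nia.
rewrite Ecs in R1 R2.
exists (subst2 Mq (a *: 'X^V) E); split=> //; split=> //.
by rewrite -expnS -mulnA -expnSr in R3 R4.
Qed.

End CaseI.

Section CaseII.
Hypothesis Hii : cc = (be * delta)%N.
Hypothesis HD0 : (0 < D)%N.

Lemma Inv2 M n : (C + d <= M)%N -> (delta <= M)%N ->
  exists E, approx al be (be * delta ^ n) (Qit M p q n) E /\ hom al be (be * delta ^ n) E /\
    top E (d ^ n) /\ bot E (D ^ n).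
Proof.
move=> HM1 HM3; elim: n => [|n [E [H1 [H2 [H3 H4]]]]].
  exists 'X; rewrite expn0 muln1 /approx subrr; split; first exact: wge0.
  by split; [exact: Xhom| split; [exact: Xtop| exact: Xbot]].
have [a [Ha HA]] := pit_approx n HM3.
set V := (delta ^ n)%N in HA H1 H2.
have HV : (0 < V)%N by rewrite expn_gt0 Hdelta.
have W1 : wge (al * V) (be * V) (cc * V).+1 (trunc2 M q - Eq) by apply: wge_scale; last exact: wge_Eq.
have W2 : hom (al * V) (be * V) (cc * V) Eq by apply: hom_scale; exact: hom_Eq.
have HT : (0 < d ^ n)%N by rewrite expn_gt0 (leq_ltn_trans _ HDd).
have Hsz : (0 < D ^ n)%N || (size Eq <= D.+1)%N by rewrite expn_gt0 HD0.
have [R1 [R2 [R3 R4]]] := Dstep H1 H2 H3 H4 HT HA Ha HV W1 W2 top_Eq bot_Eq Hsz.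
have Ecs : (cc * V)%N = (be * delta ^ n.+1)%N by rewrite Hii /V expnS mulnA.
rewrite Ecs in R1 R2.
exists (subst2 Eq (a *: 'X^V) E); split=> //; split=> //.
by rewrite -expnS -expnSr in R3 R4.
Qed.

End CaseII.

Lemma coef_nz_Y (Q E : P2) cn x Y : approx al be cn Q E -> hom al be cn E -> E`_Y != 0 ->
  (al * x + be * Y)%N = cn -> coef2 Q x Y != 0.
Proof.
move=> HQ HE HY HL.
set x' := (size E`_Y).-1.
have Hx' : coef2 E x' Y != 0 by rewrite /coef2 /x' -/(lead_coef _) lead_coef_eq0.
have := HE _ _ Hx'; rewrite -HL => /eqP; rewrite eqn_add2r eqn_pmul2l ?al_gt0 // => /eqP Ex.
by rewrite (approx_coef HQ HL) -Ex.
Qed.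

Lemma extract n cn T B M0 :
  (forall M, (M0 <= M)%N -> exists E, approx al be cn (Qit M p q n) E /\ hom al be cn E /\
     top E T /\ bot E B) ->
  (forall i j, Qn p q n i j != 0 -> (cn <= al * i + be * j)%N /\
     ((al * i + be * j)%N = cn -> (B <= j <= T)%N)) /\
  (forall x, (al * x + be * T)%N = cn -> Qn p q n x T != 0) /\
  (exists x, (al * x + be * B)%N = cn /\ Qn p q n x B != 0).
Proof.
move=> Hinv.
have HQn : forall i j, Qn p q n i j = coef2 (Qit (maxn (i + j) M0) p q n) i j.
  by move=> i j; apply: Qn_eq; [exact: Hp0| exact: Hq00| exact: leq_maxl].
have HET : forall E : P2, top E T -> E`_T != 0.
  by move=> E HT; have := top_nz HT; rewrite -lead_coef_eq0 /lead_coef HT.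
split.
  move=> i j; rewrite HQn.
  have [E [H1 [H2 [H3 H4]]]] := Hinv _ (leq_maxr (i + j) M0).
  move=> Hc; split; first exact: (approx_wge H1 (hom_wge H2)).
  move=> HL; rewrite (approx_coef H1 HL) in Hc.
  have HEj : E`_j != 0 by apply: contraNneq Hc => Hj; rewrite /coef2 Hj coef0.
  apply/andP; split.
    rewrite leqNgt; apply/negP => Hj; case: H4 => H4 _; move: HEj; rewrite H4 // eqxx; done.
  rewrite -ltnS -H3; apply: contraNT HEj; rewrite -leqNgt => Hs.
  by rewrite nth_default.
split.
  move=> x HL; rewrite HQn.
  have [E [H1 [H2 [H3 H4]]]] := Hinv _ (leq_maxr (x + T) M0).
  exact: coef_nz_Y H1 H2 (HET _ H3) HL.
have [E [H1 [H2 [H3 [H4 H5]]]]] := Hinv _ (leqnn M0).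
set x := (size E`_B).-1.
have Hx : coef2 E x B != 0 by rewrite /coef2 /x -/(lead_coef _) lead_coef_eq0.
have HL := H2 _ _ Hx.
exists x; split=> //; rewrite HQn.
have [E' [H1' [H2' [H3' [H4' H5']]]]] := Hinv _ (leq_maxr (x + B) M0).
exact: coef_nz_Y H1' H2' H5' HL.
Qed.

End Main.


Lemma gamma_nS g de dd n : gamma_n g de dd n.+1 = (g * de ^ n + dd * gamma_n g de dd n)%N.
Proof.
rewrite /gamma_n big_ord_recl /= subn0 expn0 muln1 mulnDr; congr (_ + _)%N.
rewrite mulnCA !big_distrr /=; apply: eq_bigr => k _.
rewrite /bump /= add1n expnS.
have -> : (n - k.+1 = n.-1 - k)%N by case: n k => [[]//|n] k /=; lia.
ring.
Qed.

Lemma gamma_n0 g de dd : gamma_n g de dd 0 = 0%N.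
Proof. by rewrite /gamma_n big_ord0 muln0. Qed.

Lemma cs_formula delta gam d C D n :
  cs delta gam d C D n = ((d - D) * gamma_n gam delta d n + (C - gam) * d ^ n)%N.
Proof.
elim: n => [|n IH] /=; first by rewrite gamma_n0 muln0 expn0 muln1.
rewrite IH gamma_nS expnS; nia.
Qed.

Lemma S_formula (aC bb delta D : nat) n : (aC + bb * D = bb * delta)%N ->
  (aC * gamma_n 1 delta D n + bb * D ^ n = bb * delta ^ n)%N.
Proof.
move=> H; elim: n => [|n IH]; first by rewrite gamma_n0 muln0 !expn0.
rewrite gamma_nS mul1n !expnS; nia.
Qed.

Section Conclude.
Variable R : realType.
Variable K : comNzRingType.
Variable g : nat -> nat -> K.

Lemma conclude (al be cn i1 T x2 B : nat) : (0 < al)%N -> (0 < be)%N ->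
  (forall i j, g i j != 0 -> (cn <= al * i + be * j)%N /\
     ((al * i + be * j)%N = cn -> (B <= j <= T)%N)) ->
  (al * i1 + be * T)%N = cn -> (al * x2 + be * B)%N = cn ->
  g i1 T != 0 -> g x2 B != 0 -> (B < T)%N ->
  next_vertex g (i1%:R : R, T%:R : R) (x2%:R, B%:R) /\
  slope (i1%:R : R) T%:R x2%:R B%:R = - (al%:R / be%:R) /\
  be%:R * y_intercept (i1%:R : R) T%:R x2%:R B%:R = cn%:R.
Proof.
move=> Ha Hb Hs L1 L2 G1 G2 HBT.
have Hlt : (i1 < x2)%N.
  have h : (be * B < be * T)%N by rewrite ltn_pmul2l.
  have h2 : (al * i1 < al * x2)%N by lia.
  by rewrite ltn_pmul2l in h2.
split.
  apply: (next_vertex_of (a := al%:R) (b := be%:R) (c := cn%:R)) => //.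
  - by rewrite ltr0n.
  - by rewrite ltr0n.
  - move=> i j Hg; have [H1 H2] := Hs i j Hg; rewrite natL ler_nat; split=> // /eqP.
    rewrite eqr_nat => /eqP HL; have /andP [Hj1 Hj2] := H2 HL.
    rewrite !ler_nat; apply/andP; split.
      have := leq_mul (leqnn be) Hj2; move=> H3.
      have : (al * i1 <= al * i)%N by lia.
      by rewrite leq_pmul2l.
    have := leq_mul (leqnn be) Hj1; move=> H3.
    have : (al * i <= al * x2)%N by lia.
    by rewrite leq_pmul2l.
  - by rewrite natL L1.
  - by rewrite natL L2.
have HaR : (0 : R) < al%:R by rewrite ltr0n.
have HbR : (0 : R) < be%:R by rewrite ltr0n.
have E1 : (al%:R * i1%:R + be%:R * T%:R : R) = cn%:R by rewrite natL L1.
have E2 : (al%:R * x2%:R + be%:R * B%:R : R) = cn%:R by rewrite natL L2.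
have Hd : (x2%:R - i1%:R : R) != 0 by rewrite subr_eq0 eqr_nat neq_ltn Hlt orbT.
have E4 : be%:R * (B%:R - T%:R) = - (al%:R * (x2%:R - i1%:R)) :> R by lra.
have E5 : (B%:R - T%:R : R) = be%:R^-1 * - (al%:R * (x2%:R - i1%:R)).
  by rewrite -E4 mulKf // lt0r_neq0.
have Hb0 : (be%:R : R) != 0 by rewrite lt0r_neq0.
have Hsl : slope (i1%:R : R) T%:R x2%:R B%:R = - (al%:R / be%:R).
  by rewrite /slope E5; field; rewrite Hb0 Hd.
split=> //; rewrite /y_intercept -/(slope (i1%:R : R) T%:R x2%:R B%:R) Hsl.
by rewrite -E1; field; rewrite ?Hb0 ?Hd.
Qed.

End Conclude.


Unset Implicit Arguments.

Theorem proposition5 (R : realType)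
  (p : nat -> R[i]) (q : nat -> nat -> R[i]) (delta : nat)
  (Hdelta : (1 <= delta)%N)
  (Hp_low : forall i, (i < delta)%N -> p i = 0)
  (Hp_lead : p delta != 0)
  (Hp_conv : convergent1 p)
  (Hq00 : q 0%N 0%N = 0)
  (Hq_nz : exists i j, q i j != 0)
  (Hq_conv : convergent2 q)
  (gamma d C D : nat)
  (Hfirst_v : is_vertex (R := R) q (gamma%:R, d%:R))
  (Hfirst : forall u : R * R, is_vertex q u -> gamma%:R <= u.1)
  (Hsecond : next_vertex (R := R) q (gamma%:R, d%:R) (C%:R, D%:R))
  (Hcase3 : y_intercept (gamma%:R : R) d%:R C%:R D%:R <= delta%:R) :
  let T1 : R := y_intercept gamma%:R d%:R C%:R D%:R in
  let l2 : R := (C%:R - gamma%:R) / (d%:R - D%:R) in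
  (T1 < delta%:R ->
   forall n : nat, (1 <= n)%N ->
     let gn : R := (gamma_n gamma delta d n)%:R in
     let dn : R := (d ^ n)%N%:R in
     let Cn : R := gn - (gamma%:R - C%:R) * (d ^ n.-1)%N%:R in
     let Dn : R := (D * d ^ n.-1)%N%:R in
     next_vertex (Qn p q n) (gn, dn) (Cn, Dn) /\
     slope gn dn Cn Dn = - l2^-1 /\
     y_intercept gn dn Cn Dn < (delta ^ n)%N%:R) /\
  (T1 = delta%:R -> (0 < D)%N ->
   forall n : nat, (1 <= n)%N ->
     let gn : R := (gamma_n gamma delta d n)%:R in
     let dn : R := (d ^ n)%N%:R in
     let Cs : R := ((\sum_(k < n) delta ^ (n.-1 - k) * D ^ k) * C)%N%:R in
     let Ds : R := (D ^ n)%N%:R in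
     next_vertex (Qn p q n) (gn, dn) (Cs, Ds) /\
     slope gn dn Cs Ds = - l2^-1 /\
     y_intercept gn dn Cs Ds = (delta ^ n)%N%:R).
Proof.
move=> T1 l2.
have [Hqg SP1] := G1_left Hq_nz Hfirst_v Hfirst.
have HgC := G1_lt Hsecond.
have HDd := G1_Dd Hq_nz Hfirst_v Hfirst Hsecond.
have SP2 := G1_SP2 Hq_nz Hfirst_v Hfirst Hsecond.
have SP3 := G1_SP3 Hq_nz Hfirst_v Hfirst Hsecond.
have HqC := G1_CD Hq_nz Hfirst_v Hfirst Hsecond.
have HccCD := ccCD Hq_nz Hfirst_v Hfirst Hsecond.
rewrite /al /be /cc in SP2 SP3 HccCD.
set al := (d - D)%N in SP2 SP3 HccCD *.
set be := (C - gamma)%N in SP2 SP3 HccCD *.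
have Hal : (0 < al)%N by rewrite subn_gt0.
have Hbe : (0 < be)%N by rewrite subn_gt0.
have HbeR : (be%:R : R) = C%:R - gamma%:R by rewrite natrB // ltnW.
have HalR : (al%:R : R) = d%:R - D%:R by rewrite natrB // ltnW.
have Hb0 : (be%:R : R) != 0 by rewrite pnatr_eq0 -lt0n.
have Ha0 : (al%:R : R) != 0 by rewrite pnatr_eq0 -lt0n.
have HT1 : (be%:R : R) * T1 = (al * gamma + be * d)%N%:R.
  by rewrite /T1 /y_intercept natrD !natrM HalR; rewrite HbeR in Hb0 *; field; rewrite Hb0.
have Hl2 : - l2^-1 = - ((al%:R : R) / be%:R) by rewrite /l2 -HbeR -HalR invf_div.
set M0 := (C + d + gamma + delta)%N.
have HM : forall M, (M0 <= M)%N -> [/\ (C + d <= M)%N, (gamma + d <= M)%N & (delta <= M)%N].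
  move=> M; rewrite /M0 => H; split; lia.
split.
- move=> HT [//|m] Hn gn dn Cn Dn.
  have Hi : (al * gamma + be * d < be * delta)%N.
    rewrite -(ltr_nat R) -HT1 natrM ltr_pM2l //; by rewrite ltr0n.
  have Hinv : forall M, (M0 <= M)%N -> exists E, approx al be (cs delta gamma d C D m.+1) (Qit M p q m.+1) E /\
      hom al be (cs delta gamma d C D m.+1) E /\ top E (d ^ m.+1) /\ bot E (D * d ^ m.+1.-1).
    move=> M /HM [H1 H2 H3].
    exact: (Inv1 Hdelta Hp_low Hp_lead HgC HDd SP1 SP2 SP3 Hqg HqC HccCD Hi H1 H2 H3 Hn).
  have [Hs [Ht [x2 [Hx2 Hg2]]]] := extract Hdelta Hp_low Hq00 HDd Hinv.
  have Hcs := cs_formula delta gamma d C D m.+1.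
  have Hg1 := Ht _ (esym Hcs).
  have HBT : (D * d ^ m.+1.-1 < d ^ m.+1)%N.
    by rewrite /= expnS ltn_pmul2r // expn_gt0 (leq_ltn_trans _ HDd).
  have [NV [SL YI]] := conclude R Hal Hbe Hs (esym Hcs) Hx2 Hg1 Hg2 HBT.
  have ECn : Cn = x2%:R.
    apply: (mulfI Ha0); apply: (addIr ((be * (D * d ^ m.+1.-1))%N%:R)).
    rewrite -natrM -natrD Hx2 Hcs /Cn /gn natrD !natrM /= expnS !natrM HalR HbeR; ring.
  rewrite /Dn ECn; split=> //; split; first by rewrite SL Hl2.
  have Hlt := proj2 (cs_le Hdelta Hp_lead HgC HDd Hqg HqC HccCD Hi m.+1) erefl.
  rewrite -(ltr_pM2l (x := be%:R)) ?ltr0n // YI -natrM ltr_nat //.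
- move=> HT HD n Hn gn dn Cs Ds.
  have Hii : (al * gamma + be * d)%N = (be * delta)%N.
    apply/eqP; rewrite -(eqr_nat R) -HT1 natrM HT //.
  have Hinv : forall M, (M0 <= M)%N -> exists E, approx al be (be * delta ^ n) (Qit M p q n) E /\
      hom al be (be * delta ^ n) E /\ top E (d ^ n) /\ bot E (D ^ n).
    move=> M /HM [H1 H2 H3].
    exact: (Inv2 Hdelta Hp_low Hp_lead HgC HDd SP1 SP2 SP3 Hqg HqC HccCD Hii HD n H1 H3).
  have [Hs [Ht [x2 [Hx2 Hg2]]]] := extract Hdelta Hp_low Hq00 HDd Hinv.
  have Hcs := cs_formula delta gamma d C D n.
  have Hcs2 : cs delta gamma d C D n = (be * delta ^ n)%N.
    elim: (n) => [|k IH] /=; first by rewrite expn0 muln1.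
    rewrite IH expnS; have h := congr1 (fun x => x * delta ^ k)%N Hii; rewrite /= in h; nia.
  have Hg1 : Qn p q n (gamma_n gamma delta d n) (d ^ n) != 0 by apply: Ht; rewrite -Hcs -Hcs2.
  have HBT : (D ^ n < d ^ n)%N by rewrite ltn_exp2r.
  have [NV [SL YI]] := conclude R Hal Hbe Hs (etrans (esym Hcs) Hcs2) Hx2 Hg1 Hg2 HBT.
  have HS : (\sum_(k < n) delta ^ (n.-1 - k) * D ^ k)%N = gamma_n 1 delta D n by rewrite /gamma_n mul1n.
  have Ex2 : x2 = (gamma_n 1 delta D n * C)%N.
    have h1 : (al * C + be * D = be * delta)%N by rewrite HccCD Hii.
    have h2 := S_formula n h1; rewrite -Hx2 in h2.
    have h3 : (al * x2 = al * (gamma_n 1 delta D n * C))%N by nia.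
    by apply/eqP; rewrite -(eqn_pmul2l Hal) h3.
  rewrite /Cs HS -Ex2; split=> //; split; first by rewrite SL Hl2.
  apply: (mulfI Hb0); rewrite YI natrM //.
Qed.
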